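(* For all $(u_1,u_2)\in[0,1)^2$ and all integers $n\ge 0$, $$\big|\lfloor u_1\lfloor nu_2\rfloor\rfloor-\lfloor u_2\lfloor nu_1\rfloor\rfloor\big|\le 1.$$ *)

(* Defs.v *)
From mathcomp Require Import all_boot all_order all_algebra.
Set Implicit Arguments. Unset Strict Implicit. Unset Printing Implicit Defensive.

(* Main.v *)
Require Import Defs.
From mathcomp Require Import all_boot all_order all_algebra.
From mathcomp Require Import ring lra zify.
Import Order.TTheory GRing.Theory Num.Theory.
Local Open Scope ring_scope.

Lemma floor_close (R : archiRealFieldType) (x y z : R) :
  x - 1 < y -> y <= x -> x - 1 < z -> z <= x ->
  `| Num.floor y - Num.floor z | <= 1.
Proof.
move=> h1 h2 h3 h4.
have fy := floor_le y; have gy := floorD1_gt y.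
have fz := floor_le z; have gz := floorD1_gt z.
rewrite intrD in gy gz.
have A : ((Num.floor y - Num.floor z)%:~R : R) < 2%:~R.
  rewrite intrB; lra.
have B : ((Num.floor z - Num.floor y)%:~R : R) < 2%:~R.
  rewrite intrB; lra.
rewrite ltr_int in A; rewrite ltr_int in B.
rewrite ler_norml; apply/andP; split; lia.
Qed.

Theorem lemma2p2 (R : archiRealFieldType) (u1 u2 : R) (n : nat)
  (h1 : 0 <= u1) (h1' : u1 < 1) (h2 : 0 <= u2) (h2' : u2 < 1) :
  `| Num.floor (u1 * (Num.floor (n%:R * u2))%:~R)
     - Num.floor (u2 * (Num.floor (n%:R * u1))%:~R) | <= 1.
Proof.
set a := (Num.floor (n%:R * u2))%:~R : R.
set b := (Num.floor (n%:R * u1))%:~R : R.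
have fa : a <= n%:R * u2 by apply: floor_le.
have ga : n%:R * u2 < a + 1 by rewrite /a -[1]/(1%:~R) -intrD; apply: floorD1_gt.
have fb : b <= n%:R * u1 by apply: floor_le.
have gb : n%:R * u1 < b + 1 by rewrite /b -[1]/(1%:~R) -intrD; apply: floorD1_gt.
apply: (@floor_close R (u1 * u2 * n%:R)).
- have : u1 * (n%:R * u2) <= u1 * (a + 1) by apply: ler_wpM2l => //; apply: ltW.
  rewrite mulrDr mulr1 (_ : u1 * (n%:R * u2) = u1 * u2 * n%:R); last by ring.
  move=> H; lra.
- have : u1 * a <= u1 * (n%:R * u2) by apply: ler_wpM2l.
  by rewrite (_ : u1 * (n%:R * u2) = u1 * u2 * n%:R); last by ring.
- have : u2 * (n%:R * u1) <= u2 * (b + 1) by apply: ler_wpM2l => //; apply: ltW.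
  rewrite mulrDr mulr1 (_ : u2 * (n%:R * u1) = u1 * u2 * n%:R); last by ring.
  move=> H; lra.
- have : u2 * b <= u2 * (n%:R * u1) by apply: ler_wpM2l.
  by rewrite (_ : u2 * (n%:R * u1) = u1 * u2 * n%:R); last by ring.
Qed.
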